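(* If $f,g\in I$ are nonzero with $S(f)=S(g)$ and $LM(f)\neq LM(g)$, then there exist $a,b\in k^*$ such that $af+bg\neq0$ and $S(af+bg)<_{sign}S(f)$.
   Context: Let $k$ be a field with a valuation $val$, $A=k[X_1,\dots,X_n]$, $|f|$ the total degree. Fix $w\in val(k^* )^n$ and a monomial order $\le_1$. Tropical term order: for $a,b\in k^*$, $ax^\alpha<bx^\beta$ if $|x^\alpha|<|x^\beta|$, or equal degrees and $val(a)+w\cdot\alpha>val(b)+w\cdot\beta$, or equal degrees, equal such quantities and $x^\alpha<_1x^\beta$. $LM(f)$ is the monomial of the largest term of $f$. Let $f_1,\dots,f_s\in A$ ordered by increasing degree, $I=\langle f_1,\dots,f_s\rangle$, $(e_i)$ the canonical basis of $A^s$. Tame syzygy: $(a_1,\dots,a_s)\in A^s$ with $\sum a_jf_j=0$ and an $i$ with $a_i\neq0$, $a_j=0$ for $j>i$, $|a_jf_j|\le|a_if_i|$ for $j<i$; leading monomial $LM(a_i)e_i$; $LM(TSyz(F))$ is the submodule of $A^s$ generated by these. Fix a degree-refining monomial order $\le_m$. Total order $\le_{sign}$ on monomials of $A^s$: $x^\alpha e_i\le_{sign}x^\beta e_j$ if $i<j$; or $i=j$ and $|x^\alpha f_i|<|x^\beta f_i|$; or $i=j$, equal degrees, and either ($x^\alpha e_i\notin LM(TSyz(F))$, $x^\beta e_i\in LM(TSyz(F))$), or (both in and $x^\alpha\le_mx^\beta$), or (both not in and $x^\alpha\le_mx^\beta$). $I_{\le_{sign}x^\alpha e_i}=\mathrm{Span}_k\{x^\beta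 f_j:x^\beta e_j\le_{sign}x^\alpha e_i\}$; the signature $S(f)$ of nonzero $f\in I$ is the smallest $x^\alpha e_i$ with $f\in I_{\le_{sign}x^\alpha e_i}$. *)

(* Defs.v *)
From HB Require Import structures.
From mathcomp Require Import all_boot all_order all_algebra.
From mathcomp Require Import mpoly.
Set Implicit Arguments. Unset Strict Implicit. Unset Printing Implicit Defensive.
Import Order.TTheory GRing.Theory Num.Theory.
Local Open Scope ring_scope.

Definition is_valuation (K : fieldType) (R : realDomainType) (val : K -> R) : Prop :=
  (forall a b : K, a != 0 -> b != 0 -> val (a * b) = val a + val b) /\
  (forall a b : K, a != 0 -> b != 0 -> a + b != 0 ->
     Num.min (val a) (val b) <= val (a + b)).

Definition is_monomial_order (n : nat) (le : rel 'X_{1..n}) : Prop :=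
  (forall m, le m m) /\
  (forall m1 m2, le m1 m2 -> le m2 m1 -> m1 = m2) /\
  (forall m1 m2 m3, le m1 m2 -> le m2 m3 -> le m1 m3) /\
  (forall m1 m2, le m1 m2 || le m2 m1) /\
  (forall m, le 0%MM m) /\
  (forall m1 m2 m3, le m1 m2 -> le (m1 + m3)%MM (m2 + m3)%MM).

Definition degree_refining (n : nat) (le : rel 'X_{1..n}) : Prop :=
  forall m1 m2 : 'X_{1..n}, (mdeg m1 < mdeg m2)%N -> le m1 m2.

Section Tropical.
Variables (K : fieldType) (R : realDomainType) (val : K -> R) (n : nat)
          (w : 'I_n -> R) (le1 : rel 'X_{1..n}).

Definition wdot (m : 'X_{1..n}) : R := \sum_(i < n) w i * (m i)%:R.

Definition term_lt (a : K) (m1 : 'X_{1..n}) (b : K) (m2 : 'X_{1..n}) : bool :=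
  [|| (mdeg m1 < mdeg m2)%N,
      (mdeg m1 == mdeg m2) && (val b + wdot m2 < val a + wdot m1)
    | [&& mdeg m1 == mdeg m2, val a + wdot m1 == val b + wdot m2,
          le1 m1 m2 & m1 != m2]].

(* leading monomial: the monomial of the largest term of p
   (0%MM if p = 0, never used in that case) *)
Definition LM (p : {mpoly K[n]}) : 'X_{1..n} :=
  foldl (fun acc m => if term_lt p@_acc acc p@_m m then m else acc)
        (head 0%MM (msupp p)) (msupp p).

Variables (s : nat) (F : 'I_s -> {mpoly K[n]}) (lem : rel 'X_{1..n}).

(* elements of A^s are functions 'I_s -> A *)
Definition tame_syzygy (a : 'I_s -> {mpoly K[n]}) (i : 'I_s) : Prop :=
  [/\ \sum_(j < s) a j * F j = 0,
      a i != 0,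
      (forall j : 'I_s, (i < j)%N -> a j = 0) &
      (forall j : 'I_s, (j < i)%N -> (msize (a j * F j) <= msize (a i * F i))%N)].

Definition mono_e (m : 'X_{1..n}) (i : 'I_s) : 'I_s -> {mpoly K[n]} :=
  fun j => if j == i then 'X_[m] else 0.

(* membership in LM(TSyz(F)) : the submodule of A^s generated by the
   LM(a_i) e_i, a a tame syzygy with index i; elements are finite
   A-linear combinations of generators. *)
Definition in_LMTSyz (v : 'I_s -> {mpoly K[n]}) : Prop :=
  exists l : seq ({mpoly K[n]} * ('I_s * 'X_{1..n})),
    (forall t, t \in l -> exists a, tame_syzygy a t.2.1 /\ LM (a t.2.1) = t.2.2) /\
    (forall j : 'I_s, v j = \sum_(t <- l) t.1 * mono_e t.2.2 t.2.1 j).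

Definition sign_le (al : 'X_{1..n}) (i : 'I_s) (be : 'X_{1..n}) (j : 'I_s) : Prop :=
  (i < j)%N \/
  (i = j /\
   ((msize ('X_[al] * F i) < msize ('X_[be] * F i))%N \/
    (msize ('X_[al] * F i) = msize ('X_[be] * F i) /\
     ((~ in_LMTSyz (mono_e al i) /\ in_LMTSyz (mono_e be i)) \/
      (in_LMTSyz (mono_e al i) /\ in_LMTSyz (mono_e be i) /\ lem al be) \/
      (~ in_LMTSyz (mono_e al i) /\ ~ in_LMTSyz (mono_e be i) /\ lem al be))))).

Definition sign_lt (al : 'X_{1..n}) (i : 'I_s) (be : 'X_{1..n}) (j : 'I_s) : Prop :=
  sign_le al i be j /\ (al, i) <> (be, j).

Definition in_I_le (f : {mpoly K[n]}) (al : 'X_{1..n}) (i : 'I_s) : Prop :=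
  exists l : seq (K * ('X_{1..n} * 'I_s)),
    (forall t, t \in l -> sign_le t.2.1 t.2.2 al i) /\
    f = \sum_(t <- l) t.1 *: ('X_[t.2.1] * F t.2.2).

Definition is_signature (f : {mpoly K[n]}) (al : 'X_{1..n}) (i : 'I_s) : Prop :=
  in_I_le f al i /\ (forall be j, in_I_le f be j -> sign_le al i be j).

Definition in_ideal (f : {mpoly K[n]}) : Prop :=
  exists h : 'I_s -> {mpoly K[n]}, f = \sum_(j < s) h j * F j.

End Tropical.

(* Main.v *)
Require Import Defs.
From HB Require Import structures.
From mathcomp Require Import all_boot all_order all_algebra.
From mathcomp Require Import mpoly.
From Stdlib Require Import Classical.
Import Order.TTheory GRing.Theory Num.Theory.
Local Open Scope ring_scope.

Section LMsec.
Variables (K : fieldType) (R : realDomainType) (val : K -> R) (n : nat)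
          (w : 'I_n -> R) (le1 : rel 'X_{1..n}).
Hypothesis Hval : is_valuation val.
Hypothesis Hle1 : is_monomial_order le1.

Definition lexT (d1 : nat) (v1 : R) (m1 : 'X_{1..n}) (d2 : nat) (v2 : R) (m2 : 'X_{1..n}) :=
  [|| (d1 < d2)%N, (d1 == d2) && (v2 < v1)
    | [&& d1 == d2, v1 == v2, le1 m1 m2 & m1 != m2]].

Lemma term_ltE a m1 b m2 : term_lt val w le1 a m1 b m2 =
  lexT (mdeg m1) (val a + wdot w m1) m1 (mdeg m2) (val b + wdot w m2) m2.
Proof. by []. Qed.

Lemma lexT_trans d1 v1 m1 d2 v2 m2 d3 v3 m3 :
  lexT d1 v1 m1 d2 v2 m2 -> lexT d2 v2 m2 d3 v3 m3 -> lexT d1 v1 m1 d3 v3 m3.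
Proof.
case: Hle1 => _ [anti [tr _]].
rewrite /lexT.
case/or3P => [h1|/andP[/eqP e1 h1]|/and4P[/eqP e1 /eqP e1' h1 n1]];
case/or3P => [h2|/andP[/eqP e2 h2]|/and4P[/eqP e2 /eqP e2' h2 n2]]; subst.
- by rewrite (ltn_trans h1 h2).
- by rewrite h1.
- by rewrite h1.
- by rewrite h2.
- by rewrite eqxx (lt_trans h2 h1) orbT.
- by rewrite eqxx h1 orbT.
- by rewrite h2.
- by rewrite eqxx h2 orbT.
- idtac.
  apply/orP; right; apply/orP; right; rewrite !eqxx (tr _ _ _ h1 h2) /=.
  apply/eqP => E; subst m3.
  by move: n2; rewrite (anti _ _ h1 h2) eqxx.
Qed.

Lemma lexT_irr d v m : ~~ lexT d v m d v m.
Proof. by rewrite /lexT ltnn ltxx !eqxx /= !andbF. Qed.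

Lemma lexT_total d1 v1 m1 d2 v2 m2 : m1 != m2 ->
  lexT d1 v1 m1 d2 v2 m2 || lexT d2 v2 m2 d1 v1 m1.
Proof.
case: Hle1 => _ [anti [tr [tot _]]] ne.
rewrite /lexT; case: (ltngtP d1 d2) => [h|h|h] //=; subst.
rewrite ?eqxx /=.
case: (ltgtP v1 v2) => [h|h|h] //=; subst; rewrite ?orbT //.
rewrite (eq_sym m2) ne; by case/orP: (tot m1 m2) => ->; rewrite ?orbT.
Qed.

Definition Tc (c : 'X_{1..n} -> K) m1 m2 := term_lt val w le1 (c m1) m1 (c m2) m2.

Lemma foldl_max c (l : seq 'X_{1..n}) acc :
  let r := foldl (fun a m => if Tc c a m then m else a) acc l in
  r \in acc :: l /\ forall x, x \in acc :: l -> ~~ Tc c r x.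
Proof.
elim: l acc => [|x l IH] acc /=.
  split; first by rewrite inE eqxx.
  move=> y; rewrite inE => /eqP ->; rewrite /Tc term_ltE; exact: lexT_irr.
case: (IH (if Tc c acc x then x else acc)) => IH1 IH2.
set r := foldl _ _ _ in IH1 IH2 *.
split.
  case: ifP IH1 => _; rewrite !inE; first by case/orP=> ->; rewrite ?orbT.
  by case/orP=> ->; rewrite ?orbT.
have trT : forall a b d, Tc c a b -> Tc c b d -> Tc c a d.
  move=> a b d; rewrite /Tc !term_ltE; exact: lexT_trans.
have totT : forall a b, a != b -> Tc c a b || Tc c b a.
  move=> a b; rewrite /Tc !term_ltE; exact: lexT_total.
move=> y; rewrite !inE => /or3P[/eqP->|/eqP->|yl].
- case: ifP IH2 => h IH2.
    apply/negP => H; move: (IH2 x); rewrite inE eqxx => /(_ isT)/negP; apply.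
    exact: trT H h.
  by apply: IH2; rewrite inE eqxx.
- case: ifP IH2 => h IH2; first by apply: IH2; rewrite inE eqxx.
  apply/negP => H.
  have Hra : ~~ Tc c r acc by apply: IH2; rewrite inE eqxx.
  have [E|ne] := eqVneq r acc; first by move: H; rewrite E h.
  case/orP: (totT _ _ ne) => H2; first by rewrite H2 in Hra.
  by rewrite (trT _ _ _ H2 H) in h.
- by apply: IH2; rewrite inE yl orbT.
Qed.

Lemma LM_max (p : {mpoly K[n]}) : p != 0 ->
  LM val w le1 p \in msupp p /\
  forall x, x \in msupp p -> ~~ Tc (fun m => p@_m) (LM val w le1 p) x.
Proof.
move=> nz; rewrite /LM.
case E: (msupp p) => [|a l].
  by move/eqP: E; rewrite msupp_eq0 (negbTE nz).
have := foldl_max (fun m => p@_m) (a :: l) a.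
rewrite /= => -[H1 H2]; split.
  by move: H1; rewrite inE; case/orP => // /eqP ->; rewrite inE eqxx.
move=> x Hx; apply: H2; by rewrite inE Hx orbT.
Qed.

Lemma max_uniq c (S : seq 'X_{1..n}) r r' : r \in S -> r' \in S ->
  (forall x, x \in S -> ~~ Tc c r x) -> (forall x, x \in S -> ~~ Tc c r' x) -> r = r'.
Proof.
move=> h h' H H'; apply/eqP; apply/negPn/negP => ne.
case/orP: (lexT_total (mdeg r) (val (c r) + wdot w r) r (mdeg r') (val (c r') + wdot w r') r' ne) => T.
  by move: (H _ h'); rewrite /Tc term_ltE T.
by move: (H' _ h); rewrite /Tc term_ltE T.
Qed.

Lemma LM_scale (k : K) (p : {mpoly K[n]}) : k != 0 ->
  LM val w le1 (k *: p) = LM val w le1 p.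
Proof.
move=> nzk; have [->|nzp] := eqVneq p 0; first by rewrite scaler0.
have nzq : k *: p != 0 by rewrite scaler_eq0 negb_or nzk nzp.
have Hm := perm_mem (msuppZ p nzk).
case: (LM_max _ nzq) => q1 q2; case: (LM_max _ nzp) => p1 p2.
have ET : forall a b, a \in msupp p -> b \in msupp p ->
    Tc (fun m => (k *: p)@_m) a b = Tc (fun m => p@_m) a b.
  move=> a b ha hb; rewrite /Tc !term_ltE /lexT !mcoeffZ.
  case: Hval => Hm1 _.
  rewrite mcoeff_msupp in ha; rewrite mcoeff_msupp in hb.
  rewrite !Hm1 // -!addrA ltrD2l (inj_eq (addrI _)) //.
apply: (@max_uniq (fun m => p@_m) (msupp p)) => //.
- by rewrite -Hm.
- move=> x hx; rewrite -ET //; first by apply: q2; rewrite Hm.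
  by rewrite -Hm.
Qed.
End LMsec.

Lemma nat_min (P : nat -> Prop) : (exists k, P k) -> exists k, P k /\ forall m, P m -> (k <= m)%N.
Proof.
move=> [k Pk].
suff H : forall N k, (k <= N)%N -> P k -> exists k, P k /\ forall m, P m -> (k <= m)%N.
  exact: (H k k).
elim => [|N IH] k0 hk P0.
  exists k0; split => // m _; rewrite leqn0 in hk; by rewrite (eqP hk).
case: (classic (exists m, (m < k0)%N /\ P m)) => [[m [hm Pm]]|nm].
  apply: (IH m) => //; by rewrite -ltnS (leq_trans hm hk).
exists k0; split => // m Pm; rewrite leqNgt; apply/negP => hm; apply: nm; by exists m.
Qed.

Lemma list_min (T : eqType) (r : T -> T -> Prop) (Q : T -> Prop) (L : seq T) :
 (forall x y, r x y \/ r y x) -> (forall x y z, r x y -> r y z -> r x z) ->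
 (exists m, m \in L /\ Q m) -> exists m, m \in L /\ Q m /\ forall m', m' \in L -> Q m' -> r m m'.
Proof.
move=> tot tr; elim: L => [|a L IH] [m [hm Qm]]; first by [].
have raa : r a a by case: (tot a a).
case: (classic (exists m, m \in L /\ Q m)) => [ex|nex].
- case: (IH ex) => m1 [h1 [Q1 H1]].
  case: (classic (Q a)) => Qa.
  + case: (tot a m1) => ra.
    * exists a; split; first by rewrite inE eqxx.
      split=>// m'; rewrite inE => /orP[/eqP->|hm'] Qm' //.
      exact: tr ra (H1 _ hm' Qm').
    * exists m1; split; first by rewrite inE h1 orbT.
      split=>// m'; rewrite inE => /orP[/eqP->|hm'] Qm' //.
      exact: H1.
  + exists m1; split; first by rewrite inE h1 orbT.
    split => // m'; rewrite inE => /orP[/eqP->|hm'] Qm' //.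
    exact: H1.
- have Qa : Q a.
    move: hm; rewrite inE => /orP[/eqP<-|hm] //.
    by exfalso; apply: nex; exists m.
  exists a; split; first by rewrite inE eqxx.
  split=>// m'; rewrite inE => /orP[/eqP->|hm'] Qm' //.
  by exfalso; apply: nex; exists m'.
Qed.

Section Sign.
Variables (K : fieldType) (R : realDomainType) (val : K -> R) (n : nat)
          (w : 'I_n -> R) (le1 : rel 'X_{1..n}) (s : nat) (F : 'I_s -> {mpoly K[n]})
          (lem : rel 'X_{1..n}).
Hypothesis Hlem : is_monomial_order lem.
Hypothesis Hlem_deg : degree_refining lem.
Local Notation SL := (sign_le val w le1 F lem).
Local Notation SLT := (sign_lt val w le1 F lem).
Local Notation IL := (in_LMTSyz val w le1 F).
Local Notation ILE := (in_I_le val w le1 F lem).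

Lemma SL_trans a i b j c k : SL a i b j -> SL b j c k -> SL a i c k.
Proof.
case: Hlem => _ [_ [tr _]].
rewrite /sign_le => -[h1|[e1 H1]] [h2|[e2 H2]].
- left; exact: ltn_trans h1 h2.
- by subst; left.
- by subst; left.
- subst j k; right; split=> //.
  case: H1 => [H1|[E1 C1]]; case: H2 => [H2|[E2 C2]].
  + left; exact: ltn_trans H1 H2.
  + by left; rewrite -E2.
  + by left; rewrite E1.
  + right; split; first by rewrite E1.
    have tr' := tr a b c.
    clear -C1 C2 tr'; intuition auto.
Qed.

Lemma SL_total a i b j : SL a i b j \/ SL b j a i.
Proof.
case: Hlem => _ [_ [_ [tot _]]].
rewrite /sign_le; case: (ltngtP i j) => h; [by left; left | by right; left | ].
have E : i = j by apply: ord_inj. subst j.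
case: (ltngtP (msize ('X_[a] * F i)) (msize ('X_[b] * F i))) => h'.
- by left; right; split => //; left.
- by right; right; split => //; left.
- have h'' := esym h'.
  case/orP: (tot a b) => hab; case: (classic (IL (mono_e K a i))) => ca;
    case: (classic (IL (mono_e K b i))) => cb;
    first [left; right; split=>//; right; split=>//; tauto
          | right; right; split=>//; right; split=>//; tauto].
Qed.

Lemma SL_anti a i b j : SL a i b j -> SL b j a i -> a = b /\ i = j.
Proof.
case: Hlem => _ [anti _].
rewrite /sign_le => -[h1|[e1 H1]] [h2|[e2 H2]].
- by move: (ltn_trans h1 h2); rewrite ltnn.
- by subst; rewrite ltnn in h1.
- by subst; rewrite ltnn in h2.
- subst j; split => //.
  case: H1 => [H1|[E1 C1]]; case: H2 => [H2|[E2 C2]].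
  + by move: (ltn_trans H1 H2); rewrite ltnn.
  + by rewrite E2 ltnn in H1.
  + by rewrite E1 ltnn in H2.
  + have [lab lba] : lem a b /\ lem b a by clear -C1 C2; intuition.
    exact: anti.
Qed.

Lemma lem_min (P : 'X_{1..n} -> Prop) : (exists m, P m) -> exists m, P m /\ forall m', P m' -> lem m m'.
Proof.
move=> [m0 P0].
case: Hlem => _ [_ [tr [tot _]]].
have [d [[m1 [P1 E1]] Hd]] := nat_min (fun d => exists m, P m /\ mdeg m = d)
   (ex_intro _ (mdeg m0) (ex_intro _ m0 (conj P0 erefl))).
pose L := map (fun x : 'X_{1..n < d.+1} => bmnm x) (enum {: 'X_{1..n < d.+1}}).
have inL : forall m, mdeg m = d -> m \in L.
  move=> m Em. have pf : (mdeg m < d.+1)%N by rewrite Em.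
  apply/mapP; exists (BMultinom pf) => //; by rewrite mem_enum.
have [m [_ [[Pm Em] Hm]]] := list_min _ (fun x y => lem x y) (fun m => P m /\ mdeg m = d) L
   (fun x y => elimT orP (tot x y)) (fun x y z => tr x y z)
   (ex_intro _ m1 (conj (inL _ E1) (conj P1 E1))).
exists m; split => // m' Pm'.
have := Hd (mdeg m') (ex_intro _ m' (conj Pm' erefl)).
rewrite leq_eqVlt => /orP[/eqP e|lt].
  by apply: Hm; [apply: inL; rewrite e | split => //; rewrite e].
by apply: Hlem_deg; rewrite Em.
Qed.

Lemma sig_exists (h : {mpoly K[n]}) be j : ILE h be j ->
  exists be0 j0, is_signature val w le1 F lem h be0 j0.
Proof.
move=> H.
have [k [[j0 [b1 [Ej0 H1]]] Hk]] :=
  nat_min (fun k => exists (j : 'I_s) b, nat_of_ord j = k /\ ILE h b j)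
    (ex_intro _ (nat_of_ord j) (ex_intro _ j (ex_intro _ be (conj erefl H)))).
subst k.
have [d [[b2 [H2 E2]] Hd]] :=
  nat_min (fun d => exists b, ILE h b j0 /\ msize ('X_[b] * F j0) = d)
    (ex_intro _ _ (ex_intro _ b1 (conj H1 erefl))).
case: (classic (exists b, ILE h b j0 /\ msize ('X_[b] * F j0) = d /\ ~ IL (mono_e K b j0)))
  => [[b3 [H3 [E3 N3]]]|nE].
- have [b0 [[H0 [E0 N0]] Hb0]] :=
    lem_min (fun b => ILE h b j0 /\ msize ('X_[b] * F j0) = d /\ ~ IL (mono_e K b j0))
      (ex_intro _ b3 (conj H3 (conj E3 N3))).
  exists b0, j0; split => // b' j' H'.
  have := Hk _ (ex_intro _ j' (ex_intro _ b' (conj erefl H'))).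
  rewrite leq_eqVlt => /orP[/eqP e|lt]; last by left.
  have ej : j0 = j' by apply: ord_inj. subst j'.
  right; split => //.
  have := Hd _ (ex_intro _ b' (conj H' erefl)).
  rewrite leq_eqVlt => /orP[/eqP e2|lt2]; first last.
    by left; rewrite E0.
  right; split; first by rewrite E0.
  case: (classic (IL (mono_e K b' j0))) => cb'.
  + by left.
  + right; right; split=>//; split=>//; apply: Hb0; split => //; split => //.
- have [b0 [[H0 E0] Hb0]] :=
    lem_min (fun b => ILE h b j0 /\ msize ('X_[b] * F j0) = d)
      (ex_intro _ b2 (conj H2 E2)).
  exists b0, j0; split => // b' j' H'.
  have := Hk _ (ex_intro _ j' (ex_intro _ b' (conj erefl H'))).
  rewrite leq_eqVlt => /orP[/eqP e|lt]; last by left.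
  have ej : j0 = j' by apply: ord_inj. subst j'.
  right; split => //.
  have := Hd _ (ex_intro _ b' (conj H' erefl)).
  rewrite leq_eqVlt => /orP[/eqP e2|lt2]; first last.
    by left; rewrite E0.
  right; split; first by rewrite E0.
  have c0 : IL (mono_e K b0 j0) by apply: NNPP => c; apply: nE; exists b0.
  have cb' : IL (mono_e K b' j0).
    by apply: NNPP => c; apply: nE; exists b'.
  right; left; split => //; split => //; apply: Hb0; split => //.
Qed.

Definition spanP (P : 'X_{1..n} * 'I_s -> Prop) (h : {mpoly K[n]}) :=
  exists l : seq (K * ('X_{1..n} * 'I_s)),
    (forall t, t \in l -> P t.2) /\ h = \sum_(t <- l) t.1 *: ('X_[t.2.1] * F t.2.2).

Lemma spanZ P c h : spanP P h -> spanP P (c *: h).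
Proof.
case=> l [Hl ->]; exists [seq (c * t.1, t.2) | t <- l]; split.
  by move=> t /mapP [t' ht' ->] /=; exact: Hl.
rewrite big_map scaler_sumr; apply: eq_bigr => t _ /=; by rewrite scalerA.
Qed.

Lemma spanD P h1 h2 : spanP P h1 -> spanP P h2 -> spanP P (h1 + h2).
Proof.
case=> l1 [H1 ->]; case=> l2 [H2 ->]; exists (l1 ++ l2); split; last by rewrite big_cat.
by move=> t; rewrite mem_cat => /orP[]; auto.
Qed.

Lemma decomp h al i : ILE h al i -> exists c h',
  spanP (fun p => SLT p.1 p.2 al i) h' /\ h = c *: ('X_[al] * F i) + h'.
Proof.
case=> l [Hl Eh].
exists (\sum_(t <- l | t.2 == (al,i)) t.1),
       (\sum_(t <- l | t.2 != (al,i)) t.1 *: ('X_[t.2.1] * F t.2.2)).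
split.
- exists [seq t <- l | t.2 != (al,i)]; split; last by rewrite big_filter.
  case=> c [b j]; rewrite mem_filter /= => /andP[ne hl]; split; first exact: (Hl _ hl).
  by move=> E; rewrite E eqxx in ne.
- rewrite Eh (bigID (fun t => t.2 == (al,i))) /=; congr (_ + _).
  rewrite scaler_suml; apply: eq_bigr => t /eqP -> //.
Qed.

Lemma span_lt_max h al i : spanP (fun p => SLT p.1 p.2 al i) h -> h != 0 ->
  exists be j, SLT be j al i /\ ILE h be j.
Proof.
case=> l [Hl Eh] nz.
case E: l => [|t0 l0]; first by rewrite Eh E big_nil eqxx in nz.
have t0in : t0.2 \in map snd l by rewrite E /= inE eqxx.
have [M [hM [_ HM]]] := list_min _ (fun x y => SL y.1 y.2 x.1 x.2) (fun _ => True) (map snd l)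
  (fun x y => SL_total y.1 y.2 x.1 x.2) (fun x y z h1 h2 => SL_trans _ _ _ _ _ _ h2 h1)
  (ex_intro _ t0.2 (conj t0in I)).
exists M.1, M.2; split.
  by case/mapP: hM => t ht ->; exact: Hl.
exists l; split => //.
move=> t ht; apply: HM => //; exact: map_f.
Qed.

End Sign.

Arguments LM_scale {K R val n w le1} Hval Hle1 {k p} _.
Arguments SL_trans {K R val n w le1 s F lem} Hlem {a i b j c k} _ _.
Arguments SL_anti {K R val n w le1 s F lem} Hlem {a i b j} _ _.
Arguments sig_exists {K R val n w le1 s F lem} Hlem Hlem_deg {h be j} _.
Arguments spanZ {K n s F P} c {h} _.
Arguments spanD {K n s F P h1 h2} _ _.
Arguments decomp {K R val n w le1 s F lem h al i} _.
Arguments span_lt_max {K R val n w le1 s F lem} Hlem {h al i} _ _.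

Theorem mainTheorem3
  (K : fieldType) (R : realDomainType) (val : K -> R) (n : nat)
  (w : 'I_n -> R) (le1 lem : rel 'X_{1..n}) (s : nat) (F : 'I_s -> {mpoly K[n]})
  (Hval : is_valuation val)
  (Hw : forall i : 'I_n, exists c : K, c != 0 /\ val c = w i)
  (Hle1 : is_monomial_order le1)
  (Hlem : is_monomial_order lem) (Hlem_deg : degree_refining lem)
  (HF : forall i j : 'I_s, (i <= j)%N -> (msize (F i) <= msize (F j))%N)
  (f g : {mpoly K[n]}) (al : 'X_{1..n}) (i : 'I_s) :
  in_ideal F f -> in_ideal F g -> f != 0 -> g != 0 ->
  is_signature val w le1 F lem f al i ->
  is_signature val w le1 F lem g al i ->
  LM val w le1 f != LM val w le1 g ->
  exists a b : K, [/\ a != 0, b != 0, a *: f + b *: g != 0 &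
    exists (be : 'X_{1..n}) (j : 'I_s),
      is_signature val w le1 F lem (a *: f + b *: g) be j /\
      sign_lt val w le1 F lem be j al i].
Proof.
move=> _ _ nzf nzg [Sf Mf] [Sg Mg] neLM.
have [cf [f' [Sf' Ef]]] := decomp Sf.
have [cg [g' [Sg' Eg]]] := decomp Sg.
have notlt : forall h, h != 0 ->
    spanP K n s F (fun p => sign_lt val w le1 F lem p.1 p.2 al i) h ->
    (forall be j, in_I_le val w le1 F lem h be j -> sign_le val w le1 F lem al i be j) -> False.
  move=> h nz Sp Mh.
  have [be [j [[Hle Hne] Hin]]] := span_lt_max Hlem Sp nz.
  have [E1 E2] := SL_anti Hlem (Mh _ _ Hin) Hle.
  by apply: Hne; rewrite -E1 -E2.
have nzcf : cf != 0.
  apply/negP => /eqP c0; apply: (notlt f nzf _ Mf).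
  by rewrite Ef c0 scale0r add0r.
have nzcg : cg != 0.
  apply/negP => /eqP c0; apply: (notlt g nzg _ Mg).
  by rewrite Eg c0 scale0r add0r.
exists cg, (- cf).
have Eh : cg *: f + - cf *: g = cg *: f' + - (cf *: g').
  rewrite Ef Eg scaleNr !scalerDr !scalerA [cf * cg]mulrC opprD addrACA subrr add0r //.
have nzh : cg *: f + - cf *: g != 0.
  apply/negP; rewrite scaleNr subr_eq0 => /eqP E.
  move/negP: neLM; apply.
  by rewrite -(LM_scale Hval Hle1 nzcg) E (LM_scale Hval Hle1 nzcf).
have Sh : spanP K n s F (fun p => sign_lt val w le1 F lem p.1 p.2 al i) (cg *: f + - cf *: g).
  rewrite Eh; apply: spanD; first exact: spanZ.
  rewrite -scaleNr; exact: spanZ.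
have [be [j [[Hle Hne] Hin]]] := span_lt_max Hlem Sh nzh.
have [be2 [j2 [S2 M2]]] := sig_exists Hlem Hlem_deg Hin.
split => //; first by rewrite oppr_eq0.
exists be2, j2; split => //; split.
  have H1 := M2 _ _ Hin. have H3 := SL_trans Hlem H1 Hle. exact: H3.
case => e1 e2; subst be2 j2.
have [E1 E2] := SL_anti Hlem (M2 _ _ Hin) Hle.
by apply: Hne; rewrite -E1 -E2.
Qed.
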